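(* Let $n\ge2$, $\mathbb W:=\mathbb R^{n\times n}_{\mathrm{sym}}$ with the Frobenius inner product, $D:=\{W\in\mathbb W: W\succeq0,\ \operatorname{rank}W\le1\}$, $G\colon\mathbb W\to\mathbb R^n$, $G(W):=\operatorname{diag}W$, and $C:=\{e\}$ with $e$ the all-ones vector. Let $W$ be feasible, i.e., $W\in D$ and $\operatorname{diag}W=e$; write $W=nuu^\top$ with $u\in\{\pm n^{-1/2}\}^n$. Then $\mathcal N^{\lim}_D(W)\subset\{Y\in\mathbb W: Yu=0\}$, and GMFCQ holds at $W$: whenever $\lambda\in\mathbb R^n$ and $Y\in\mathcal N^{\lim}_D(W)$ satisfy $\operatorname{Diag}(\lambda)+Y=0$, then $\lambda=0$.
   Context: For a closed set $D\subset\mathbb W$, $\Pi_D$ is the (multivalued) Frobenius-norm projection and the limiting normal cone at $\bar W\in D$ is $\mathcal N^{\lim}_D(\bar W):=\limsup_{W'\to\bar W}\operatorname{cone}(W'-\Pi_D(W'))$ (outer set limit). $\operatorname{Diag}(\lambda)$ is the diagonal matrix with diagonal $\lambda$; note $G'(W)^*\lambda=\operatorname{Diag}(\lambda)$ and $\mathcal N_C(G(W))=\mathbb R^n$, so this is the condition $0\in G'(W)^*\lambda+\mathcal N^{\lim}_D(W),\ \lambda\in\mathcal N_C(G(W))\Rightarrow\lambda=0$. Every feasible $W$ has the form $nuu^\top$ with $u\in\{\pm n^{-1/2}\}^n$. *)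

(* Defs.v *)
From HB Require Import structures.
From mathcomp Require Import all_boot all_order all_algebra.
From mathcomp Require Import all_classical all_reals all_analysis.
Import numFieldNormedType.Exports.
Set Implicit Arguments. Unset Strict Implicit. Unset Printing Implicit Defensive.
Import Order.TTheory GRing.Theory Num.Theory.
Local Open Scope ring_scope.
Local Open Scope classical_set_scope.

Section Defs.
Variables (R : realType) (n : nat).

Definition symmx : set 'M[R]_(n, n) := [set W | W^T = W].

Definition frob_inner (A B : 'M[R]_(n, n)) : R := \tr (A^T *m B).
Definition frob_norm (A : 'M[R]_(n, n)) : R := Num.sqrt (frob_inner A A).

Definition psd (W : 'M[R]_(n, n)) : Prop :=
  forall x : 'cV[R]_n, 0 <= (x^T *m W *m x) 0 0.

Definition Dset : set 'M[R]_(n, n) :=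
  [set W | symmx W /\ psd W /\ (\rank W <= 1)%N].

Definition proj (S : set 'M[R]_(n, n)) (W : 'M[R]_(n, n)) : set 'M[R]_(n, n) :=
  [set P | S P /\ forall Q, S Q -> frob_norm (W - P) <= frob_norm (W - Q)].

Definition cone (A : set 'M[R]_(n, n)) : set 'M[R]_(n, n) :=
  [set Y | exists t : R, exists2 a, A a & 0 <= t /\ Y = t *: a].

Definition proj_residual (S : set 'M[R]_(n, n)) (W' : 'M[R]_(n, n)) : set 'M[R]_(n, n) :=
  [set W' - P | P in proj S W'].

(* limiting normal cone: outer limit, as W' -> Wbar within the space W of
   symmetric matrices, of cone(W' - Pi_S(W')) *)
Definition lim_normal_cone (S : set 'M[R]_(n, n)) (Wbar : 'M[R]_(n, n)) : set 'M[R]_(n, n) :=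
  [set Y | exists (Wk Yk : nat -> 'M[R]_(n, n)),
     (forall k, symmx (Wk k)) /\ Wk @ \oo --> Wbar /\ Yk @ \oo --> Y /\
     (forall k, cone (proj_residual S (Wk k)) (Yk k))].

Definition diagv (W : 'M[R]_(n, n)) : 'rV[R]_n := \row_i W i i.

End Defs.

(* Main.v *)
Require Import Defs.
From HB Require Import structures.
From mathcomp Require Import all_boot all_order all_algebra.
From mathcomp Require Import all_classical all_reals all_analysis.
From mathcomp Require Import ring lra.
Set Implicit Arguments. Unset Strict Implicit.
Import numFieldNormedType.Exports.
Import Order.TTheory GRing.Theory Num.Theory.
Local Open Scope ring_scope.
Local Open Scope classical_set_scope.

Lemma fiE (R : realType) n (A B : 'M[R]_(n, n)) :
  frob_inner A B = \sum_i \sum_j A j i * B j i.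
Proof.
rewrite /frob_inner /mxtrace; apply: eq_bigr => i _; rewrite mxE.
by apply: eq_bigr => j _; rewrite mxE.
Qed.

Lemma sq_ge0' (R : realType) (x : R) : 0 <= x * x.
Proof. by rewrite -expr2 sqr_ge0. Qed.

Lemma fi_ge0 (R : realType) n (A : 'M[R]_(n, n)) : 0 <= frob_inner A A.
Proof.
rewrite fiE; apply: sumr_ge0 => i _; apply: sumr_ge0 => j _; exact: sq_ge0'.
Qed.

Lemma fi_entry (R : realType) n (A : 'M[R]_(n, n)) i j : A j i * A j i <= frob_inner A A.
Proof.
rewrite fiE (bigD1 i) //= (bigD1 j (P:=predT)) //= -addrA lerDl.
apply: addr_ge0; first by apply: sumr_ge0 => k _; exact: sq_ge0'.
by apply: sumr_ge0 => k _; apply: sumr_ge0 => l _; exact: sq_ge0'.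
Qed.

Lemma fi_eq0 (R : realType) n (A : 'M[R]_(n, n)) : frob_inner A A = 0 -> A = 0.
Proof.
move=> H; apply/matrixP => j i; rewrite mxE.
have := fi_entry A i j; rewrite H => h.
have : A j i * A j i = 0 by apply/eqP; rewrite eq_le h sq_ge0'.
by move/eqP; rewrite mulf_eq0 orbb => /eqP.
Qed.

Lemma fi_sym (R : realType) n (A B : 'M[R]_(n, n)) : frob_inner A B = frob_inner B A.
Proof. by rewrite /frob_inner -mxtrace_tr trmx_mul trmxK. Qed.

Lemma fiDl (R : realType) n (A B C : 'M[R]_(n, n)) :
  frob_inner (A + B) C = frob_inner A C + frob_inner B C.
Proof. by rewrite /frob_inner linearD /= mulmxDl mxtraceD. Qed.

Lemma fiZl (R : realType) n (a : R) (A C : 'M[R]_(n, n)) :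
  frob_inner (a *: A) C = a * frob_inner A C.
Proof. by rewrite /frob_inner linearZ /= -scalemxAl mxtraceZ. Qed.

Lemma fiNl (R : realType) n (A C : 'M[R]_(n, n)) :
  frob_inner (- A) C = - frob_inner A C.
Proof. by rewrite -scaleN1r fiZl mulN1r. Qed.

Lemma fiDr (R : realType) n (A B C : 'M[R]_(n, n)) :
  frob_inner C (A + B) = frob_inner C A + frob_inner C B.
Proof. by rewrite fi_sym fiDl !(fi_sym _ C). Qed.

Lemma fiZr (R : realType) n (a : R) (A C : 'M[R]_(n, n)) :
  frob_inner C (a *: A) = a * frob_inner C A.
Proof. by rewrite fi_sym fiZl fi_sym. Qed.

Lemma fiNr (R : realType) n (A C : 'M[R]_(n, n)) :
  frob_inner C (- A) = - frob_inner C A.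
Proof. by rewrite fi_sym fiNl fi_sym. Qed.

Lemma poly4_pos (R : realType) (a b c d : R) :
  (forall s, 0 <= a * s + b * s ^+ 2 + c * s ^+ 3 + d * s ^+ 4) -> 0 < a -> False.
Proof.
move=> H a0.
have hb : b <= `|b| by exact: ler_norm.
have hc : - c <= `|c| by rewrite -normrN ler_norm.
have hd : d <= `|d| by exact: ler_norm.
have := H (- `|b|); have := normr_ge0 c; have := normr_ge0 d; have := normr_ge0 b.
move: hb hc hd; set B := `|b|; set C := `|c|; set D := `|d| => hb hc hd B0 D0 C0 _.
pose M := B + C + D + 1.
have M0 : 0 < M by rewrite /M; lra.
pose t := a / (a + M).
have aM0 : 0 < a + M by lra.
have ht : t * (a + M) = a by rewrite /t divfK // gt_eqF.
have t0 : 0 < t by rewrite /t divr_gt0.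
have t1 : t <= 1 by rewrite /t ler_pdivrMr // mul1r lerDl ltW.
clearbody t.
have := H (- t).
have -> : (- t) ^+ 2 = t * t by ring.
have -> : (- t) ^+ 3 = - (t * t * t) by ring.
have -> : (- t) ^+ 4 = t * t * (t * t) by ring.
move=> h.
have tt0 : 0 <= t * t by rewrite mulr_ge0 // ltW.
have e2 : b * (t * t) <= B * (t * t) by apply: ler_wpM2r.
have ttt0 : 0 <= t * t * t by rewrite mulr_ge0 // ltW.
have t40 : 0 <= t * t * (t * t) by rewrite mulr_ge0.
have e3' : c * - (t * t * t) <= C * (t * t * t) by rewrite mulrN -mulNr; apply: ler_wpM2r.
have e3 : C * (t * t * t) <= C * (t * t).
  by apply: ler_wpM2l => //; rewrite -[X in _ <= X]mulr1; apply: ler_wpM2l.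
have e4' : d * (t * t * (t * t)) <= D * (t * t * (t * t)) by apply: ler_wpM2r.
have e4 : D * (t * t * (t * t)) <= D * (t * t).
  apply: ler_wpM2l => //; rewrite -[X in _ <= X]mulr1; apply: ler_wpM2l => //.
  by rewrite -[1]mulr1; apply: ler_pM => //; exact: ltW.
have : 0 <= a * (- t) + (B + C + D) * (t * t).
  apply: (le_trans h); rewrite !mulrDl -!addrA; apply: lerD => //.
  apply: lerD => //; apply: lerD; [exact: le_trans e3' e3|exact: le_trans e4' e4].
have eq : (B + C + D) * t = a - a * t - t.
  apply/eqP; rewrite -subr_eq0.
  have -> : (B + C + D) * t - (a - a * t - t) = t * (a + M) - a by rewrite /M; ring.
  by rewrite ht subrr.
have -> : (B + C + D) * (t * t) = (a - a * t - t) * t by rewrite mulrA eq.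
have : 0 <= a * (t * t) by rewrite mulr_ge0 // ltW.
have : 0 < t * t by rewrite mulr_gt0.
have -> : a * - t + (a - a * t - t) * t = - (a * (t * t)) - t * t by ring.
clear; lra.
Qed.

Lemma poly4 (R : realType) (a b c d : R) :
  (forall s, 0 <= a * s + b * s ^+ 2 + c * s ^+ 3 + d * s ^+ 4) -> a = 0.
Proof.
move=> H; case: (ltrgtP a 0) => // ha; exfalso.
- apply: (@poly4_pos R (- a) b (- c) d) => [s|]; last by rewrite oppr_gt0.
  have := H (- s).
  suff -> : a * - s + b * (- s) ^+ 2 + c * (- s) ^+ 3 + d * (- s) ^+ 4 =
    - a * s + b * s ^+ 2 + - c * s ^+ 3 + d * s ^+ 4 by [].
  by ring.
- exact: (poly4_pos H).
Qed.
Lemma Q_expand (R : realType) n (P H : 'M[R]_(n, n)) (s : R) :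
  (1%:M + s *: H) *m P *m (1%:M + s *: H)^T =
  P + s *: (H *m P + P *m H^T) + s ^+ 2 *: (H *m P *m H^T).
Proof.
rewrite linearD /= trmx1 linearZ /= !mulmxDl !mulmxDr !mul1mx !mulmx1.
rewrite -!scalemxAl -!scalemxAr scalerA -expr2 scalerDr !addrA.
congr (_ + _); rewrite -!addrA; congr (_ + _); exact: addrC.
Qed.

Lemma Q_in_D (R : realType) n (P M : 'M[R]_(n, n)) :
  Dset P -> Dset (M *m P *m M^T).
Proof.
move=> [sP [pP rP]]; split; last split.
- by rewrite /symmx /= !trmx_mul trmxK sP mulmxA.
- move=> x; have := pP (M^T *m x).
  by rewrite trmx_mul trmxK !mulmxA.
- apply: leq_trans (mxrankM_maxl _ _) _; apply: leq_trans (mxrankM_maxr _ _) _; exact: rP.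
Qed.

Lemma fi_sub_sq (R : realType) n (X E : 'M[R]_(n, n)) :
  frob_inner (X - E) (X - E) = frob_inner X X - 2 * frob_inner X E + frob_inner E E.
Proof.
rewrite fiDl !fiDr !fiNl !fiNr (fi_sym E X); ring.
Qed.

Lemma fi_lin (R : realType) n (X A B : 'M[R]_(n, n)) s :
  frob_inner X (s *: A + s ^+ 2 *: B) = s * frob_inner X A + s ^+ 2 * frob_inner X B.
Proof. by rewrite fiDr !fiZr. Qed.

Lemma fi_quad (R : realType) n (A B : 'M[R]_(n, n)) s :
  frob_inner (s *: A + s ^+ 2 *: B) (s *: A + s ^+ 2 *: B) =
  s ^+ 2 * frob_inner A A + 2 * s ^+ 3 * frob_inner A B + s ^+ 4 * frob_inner B B.
Proof. rewrite fiDl !fiDr !fiZl !fiZr (fi_sym B A); ring. Qed.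

Lemma frob_le (R : realType) n (X Y : 'M[R]_(n, n)) :
  frob_norm X <= frob_norm Y -> frob_inner X X <= frob_inner Y Y.
Proof. by rewrite /frob_norm ler_sqrt // fi_ge0. Qed.

Lemma proj_orth (R : realType) n (W' P : 'M[R]_(n, n)) :
  symmx W' -> Defs.proj (@Dset R n) W' P -> (W' - P) *m P = 0.
Proof.
move=> sW [DP opt].
have sP : P^T = P by case: DP.
set Rm := W' - P.
have sR : Rm^T = Rm by rewrite /Rm linearB /= sP; rewrite sW.
have key : forall H, frob_inner Rm (H *m P + P *m H^T) = 0.
  move=> H; set A := H *m P + P *m H^T; set B := H *m P *m H^T.
  have h0 : -2 * frob_inner Rm A = 0.
    apply: (@poly4 R _ (frob_inner A A - 2 * frob_inner Rm B) (2 * frob_inner A B)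
                 (frob_inner B B)) => s.
    have := frob_le (opt _ (Q_in_D (1%:M + s *: H) DP)).
    have eq : W' - (P + s *: A + s ^+ 2 *: B) = Rm - (s *: A + s ^+ 2 *: B).
      by rewrite /Rm !opprD !addrA.
    rewrite Q_expand -/A -/B eq.
    rewrite -/Rm (fi_sub_sq Rm) fi_lin fi_quad -subr_ge0 => h.
    suff -> : -2 * frob_inner Rm A * s + (frob_inner A A - 2 * frob_inner Rm B) * s ^+ 2 +
      2 * frob_inner A B * s ^+ 3 + frob_inner B B * s ^+ 4 =
      frob_inner Rm Rm - 2 * (s * frob_inner Rm A + s ^+ 2 * frob_inner Rm B) +
      (s ^+ 2 * frob_inner A A + 2 * s ^+ 3 * frob_inner A B + s ^+ 4 * frob_inner B B) -
      frob_inner Rm Rm by [].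
    ring.
  by move: h0; rewrite mulNr => /eqP; rewrite oppr_eq0 mulf_eq0 pnatr_eq0 /= => /eqP.
have := key (Rm *m P).
rewrite /frob_inner sR trmx_mul sP sR mulmxDr mxtraceD.
rewrite (mxtrace_mulC Rm (Rm *m P *m P)) !mulmxA => h.
have hX : frob_inner (P *m Rm) (P *m Rm) = 0.
  rewrite /frob_inner trmx_mul sP sR !mulmxA.
  by move: h => /eqP; rewrite -mulr2n -mulr_natl mulf_eq0 pnatr_eq0 /= => /eqP.
have := fi_eq0 hX => h0.
by rewrite -[Rm *m P]trmxK trmx_mul sP sR h0 trmx0.
Qed.
Lemma entry_cvg (R : realType) n (Wk : nat -> 'M[R]_(n,n)) (W : 'M[R]_(n,n)) (i j : 'I_n) :
  Wk @ \oo --> W -> (fun k => Wk k i j) @ \oo --> W i j.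
Proof.
move=> h; have hc := (@coord_continuous R n n i j W).

exact: (continuous_cvg _ hc h).
Qed.
Lemma cvg_sumR (R : realType) (I : finType) (f : I -> nat -> R) (l : I -> R) :
  (forall i, f i @ \oo --> l i) -> (fun k => \sum_i f i k) @ \oo --> \sum_i l i.
Proof.
move=> h; apply: cvg_big => //; exact: add_continuous.
Qed.
Lemma uniq_lim (R : realType) (f : nat -> R) (a b : R) : f @ \oo --> a -> f @ \oo --> b -> a = b.
Proof. move=> ha hb; exact: (cvg_unique _ ha hb). Qed.
Lemma cvg0_sq (R : realType) (d e : nat -> R) :
  (forall k, d k * d k <= e k) -> e @ \oo --> 0 -> d @ \oo --> 0.
Proof.
move=> hde he.
have hs : (fun k => Num.sqrt (e k)) @ \oo --> 0.
  have h := continuous_cvg _ (@sqrt_continuous R 0) he.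
  rewrite sqrtr0 in h; exact: h.
apply: (@squeeze_cvgr _ _ _ _ (fun k => - Num.sqrt (e k)) (fun k => Num.sqrt (e k))).
- apply: nearW => k; rewrite -ler_norml -sqrtr_sqr ler_sqrt.
    by rewrite expr2; exact: hde.
  by apply: (le_trans _ (hde k)); apply: sq_ge0'.
- have h := cvgN hs; rewrite oppr0 in h; exact: h.
- exact: hs.
Qed.

Unset Implicit Arguments. Set Strict Implicit.

Theorem mainTheorem16 (R : realType) (n : nat) (W : 'M[R]_(n, n)) (u : 'cV[R]_n) :
  (2 <= n)%N ->
  Dset W -> diagv W = const_mx 1 ->
  (forall i, u i 0 = Num.sqrt (n%:R)^-1 \/ u i 0 = - Num.sqrt (n%:R)^-1) ->
  W = n%:R *: (u *m u^T) ->
  lim_normal_cone (Dset (R:=R) (n:=n)) W `<=` [set Y | symmx Y /\ Y *m u = 0]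
  /\ (forall (lam : 'rV[R]_n) (Y : 'M[R]_(n, n)),
        lim_normal_cone (Dset (R:=R) (n:=n)) W Y ->
        diag_mx lam + Y = 0 -> lam = 0).
Proof.
move=> n2 DW dW hu eW.
have n0 : (n%:R : R) != 0 by rewrite pnatr_eq0 -lt0n (leq_trans _ n2).
have usq : forall i, u i 0 * u i 0 = n%:R^-1.
  move=> i; case: (hu i) => ->; rewrite ?mulrNN -expr2 sqr_sqrtr // invr_ge0 ler0n.
have uu : u^T *m u = 1%:M.
  apply/matrixP => i j; rewrite !ord1 !mxE eqxx mulr1n.
  rewrite (eq_bigr (fun _ => n%:R^-1)) => [|k _]; last by rewrite mxE usq.
  by rewrite sumr_const card_ord -[n%:R^-1 *+ n]mulr_natr mulVf.
have part1 : lim_normal_cone (Dset (R:=R) (n:=n)) W `<=` [set Y | symmx Y /\ Y *m u = 0].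
  move=> Y [Wk [Yk [sWk [cW [cY hc]]]]].
  have : forall k, exists P, Defs.proj (@Dset R n) (Wk k) P /\ Yk k *m P = 0 /\ (Yk k)^T = Yk k.
    move=> k; case: (hc k) => t [a [P hP <-{a}] [t0 ->]].
    have sP : P^T = P by case: hP => [[]].
    exists P; split => //; split.
    - by rewrite -scalemxAl proj_orth // scaler0.
    - by rewrite linearZ /= linearB /= sP (sWk k).
  case/choice => Pk hPk.
  have cWe := fun i j => @entry_cvg _ _ _ _ i j cW.
  have cYe := fun i j => @entry_cvg _ _ _ _ i j cY.
  have dist : forall k, frob_inner (Wk k - Pk k) (Wk k - Pk k) <= frob_inner (Wk k - W) (Wk k - W).
    by move=> k; apply: frob_le; exact: (hPk k).1.2 W DW.
  have esub : forall i j, (fun k => (Wk k - W) j i) @ \oo --> 0.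
    move=> i j; have -> : (fun k => (Wk k - W) j i) = (fun k => Wk k j i - W j i).
      by apply: funext => k; rewrite !mxE.
    rewrite -(subrr (W j i)); apply: cvgB => //; exact: cvg_cst.
  have eW0 : (fun k => frob_inner (Wk k - W) (Wk k - W)) @ \oo --> 0.
    have -> : (fun k => frob_inner (Wk k - W) (Wk k - W)) =
      (fun k => \sum_i \sum_j (Wk k - W) j i * (Wk k - W) j i).
      by apply: funext => k; exact: fiE.
    have h0 : \sum_(i < n) \sum_(j < n) (0:R) * 0 = 0.
      by rewrite big1 // => i _; rewrite big1 // => j _; rewrite mulr0.
    have h : (fun k => \sum_i \sum_j (Wk k - W) j i * (Wk k - W) j i) @ \oo -->
             \sum_(i < n) \sum_(j < n) (0:R) * 0.
      apply: (@cvg_sumR _ _ (fun i k => \sum_j (Wk k - W) j i * (Wk k - W) j i)) => i.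
      apply: (@cvg_sumR _ _ (fun j k => (Wk k - W) j i * (Wk k - W) j i)) => j.
      exact: cvgM.
    by rewrite h0 in h.
  have cPe : forall i j, (fun k => Pk k i j) @ \oo --> W i j.
    move=> i j.
    have hd := @cvg0_sq R (fun k => (Wk k - Pk k) i j) _
      (fun k => le_trans (fi_entry (Wk k - Pk k) j i) (dist k)) eW0.
    have -> : (fun k => Pk k i j) = (fun k => Wk k i j - (Wk k - Pk k) i j).
      by apply: funext => k; rewrite !mxE opprB addrC subrK.
    rewrite -[W i j]subr0; apply: cvgB => //; exact: cWe.
  have YW : Y *m W = 0.
    apply/matrixP => i j; rewrite [RHS]mxE.
    apply: (@uniq_lim R (fun k => (Yk k *m Pk k) i j)).
    - have -> : (fun k => (Yk k *m Pk k) i j) = (fun k => \sum_l Yk k i l * Pk k l j).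
        by apply: funext => k; rewrite mxE.
      rewrite mxE.
      apply: (@cvg_sumR _ _ (fun l k => Yk k i l * Pk k l j)) => l.
      by apply: cvgM; [exact: cYe|exact: cPe].
    - have -> : (fun k => (Yk k *m Pk k) i j) = (fun _ => 0).
        by apply: funext => k; rewrite (hPk k).2.1 mxE.
      exact: cvg_cst.
  split.
  - rewrite /symmx /=; apply/matrixP => i j; rewrite mxE.
    apply: (@uniq_lim R (fun k => Yk k j i)); first exact: cYe.
    have -> : (fun k => Yk k j i) = (fun k => Yk k i j).
      by apply: funext => k; rewrite -{1}(hPk k).2.2 mxE.
    exact: cYe.
  - have : Y *m W *m u = n%:R *: (Y *m u).
      rewrite eW -scalemxAr -scalemxAl !mulmxA -[Y *m u *m u^T *m u]mulmxA uu mulmx1.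
      by [].
    rewrite YW mul0mx => /esym /eqP; rewrite scaler_eq0 (negbTE n0) /= => /eqP.
    by [].
split => // lam Y hY hD.
have [_ Yu] := part1 _ hY.
have dl : diag_mx lam = - Y by apply/eqP; rewrite -addr_eq0 hD.
have hdu : diag_mx lam *m u = 0 by rewrite dl mulNmx Yu oppr0.
apply/rowP => i; rewrite mxE.
have := congr1 (fun M : 'cV[R]_n => M i 0) hdu; rewrite mul_diag_mx !mxE => /eqP.
rewrite mulf_eq0 => /orP [/eqP -> //|/eqP ui].
have : u i 0 * u i 0 = 0 by rewrite ui mulr0.
rewrite usq => /eqP; rewrite invr_eq0 (negbTE n0) //.
Qed.
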